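(* Let $f:[0,1]\to\mathbb{R}$ with $f(0),f(1)\in\mathbb{Z}$ and let $n\in\mathbb{N}_+$. If $n\ge 3$, let also $\phi_n:[0,1]\to\mathbb{R}$ satisfy \[ \phi_n\left(\frac{k+1}{n}\right)-\phi_n\left(\frac{k}{n}\right)\ge \binom{n}{k+1}^{-1},\quad k=1,\dots,n-2. \] If $f$ is monotone increasing on $[0,1/n]$ and on $[1-1/n,1]$, and (when $n\ge3$) $f(x)-\phi_n(x)$ is monotone increasing on $[1/n,1-1/n]$, then $\widetilde{B}_n(f)$ is monotone increasing on $[0,1]$.
   Context: For $n\in\mathbb{N}_+$ and $f:[0,1]\to\mathbb{R}$, $\widetilde{B}_n(f)(x):=\sum_{k=0}^n \left[f\left(\frac{k}{n}\right)\binom{n}{k}\right]x^k(1-x)^{n-k}$, where $[\alpha]$ is the largest integer $\le\alpha$. Monotone increasing is meant in the non-strict sense. *)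

(* Defs.v *)
From mathcomp Require Import all_boot all_order all_algebra.
From mathcomp Require Import reals.
Set Implicit Arguments. Unset Strict Implicit. Unset Printing Implicit Defensive.
Import Order.TTheory GRing.Theory Num.Theory.
Local Open Scope ring_scope.

Definition Btilde (R : realType) (n : nat) (f : R -> R) (x : R) : R :=
  \sum_(k < n.+1)
     (Num.floor (f (k%:R / n%:R) * ('C(n, k))%:R))%:~R
       * x ^+ k * (1 - x) ^+ (n - k).

Definition mono_incr_on (R : realType) (a b : R) (g : R -> R) : Prop :=
  forall x y, a <= x -> x <= y -> y <= b -> g x <= g y.

(* Main.v *)
Require Import Defs.
From mathcomp Require Import all_boot all_order all_algebra.
From mathcomp Require Import reals.
From mathcomp Require Import ring lra.
Import Order.TTheory GRing.Theory Num.Theory.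
Local Open Scope ring_scope.

Section Bern.
Variable R : realType.

Definition bern (n : nat) (c : nat -> R) (x : R) : R :=
  \sum_(k < n.+1) c k * ('C(n, k))%:R * x ^+ k * (1 - x) ^+ (n - k).

Lemma bern0 c x : bern 0 c x = c 0%N.
Proof. by rewrite /bern big_ord1 /= !expr0 !mulr1. Qed.

Lemma bernS n c x :
  bern n.+1 c x = (1 - x) * bern n c x + x * bern n (fun k => c k.+1) x.
Proof.
rewrite /bern big_ord_recl /=.
have E : forall i : 'I_n.+1,
   c (bump 0 i) * ('C(n.+1, bump 0 i))%:R * x ^+ bump 0 i * (1 - x) ^+ (n.+1 - bump 0 i)
   = c i.+1 * ('C(n, i.+1))%:R * x ^+ i.+1 * (1 - x) ^+ (n - i)
     + x * (c i.+1 * ('C(n, i))%:R * x ^+ i * (1 - x) ^+ (n - i)).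
  move=> i; rewrite /bump /= add1n binS natrD subSS exprS; ring.
rewrite (eq_bigr _ (fun i _ => E i)) big_split /=.
rewrite -[X in _ + (_ + X) = _]mulr_sumr big_ord_recr /= (bin_small (ltnSn n)) mulr0 !mul0r addr0.
rewrite [in RHS]big_ord_recl /= mulrDr addrA; congr (_ + _ + _).
  by rewrite !bin0 !subn0 exprS; ring.
rewrite mulr_sumr; apply: eq_bigr => i _.
rewrite /bump /= add1n.
have -> : (n - i = (n - i.+1).+1)%N by rewrite subnSK.
by rewrite [(1 - x) ^+ _.+1]exprS; ring.
Qed.

Lemma bern_ge0 n c x : (forall k, (k <= n)%N -> 0 <= c k) -> 0 <= x <= 1 ->
  0 <= bern n c x.
Proof.
move=> hc /andP[h0 h1]; apply: sumr_ge0 => i _.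
apply: mulr_ge0; last by apply: exprn_ge0; rewrite subr_ge0.
apply: mulr_ge0; last exact: exprn_ge0.
by apply: mulr_ge0; [apply: hc; rewrite -ltnS | rewrite ler0n].
Qed.

Lemma bernB n c d x : bern n c x - bern n d x = bern n (fun k => c k - d k) x.
Proof. rewrite /bern -sumrB; apply: eq_bigr => i _; ring. Qed.

Lemma bern_mono n c : (forall k, (k < n)%N -> c k <= c k.+1) ->
  forall x y, 0 <= x -> x <= y -> y <= 1 -> bern n c x <= bern n c y.
Proof.
elim: n c => [|n IH] c hc x y h0 hxy h1; first by rewrite !bern0.
rewrite !bernS.
have hA := IH c (fun k hk => hc k (ltnW hk)) x y h0 hxy h1.
have hB := IH (fun k => c k.+1) (fun k hk => hc k.+1 hk) x y h0 hxy h1.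
have hD : 0 <= bern n (fun k => c k.+1) x - bern n c x.
  rewrite bernB; apply: bern_ge0; last by rewrite h0 (le_trans hxy h1).
  by move=> k hk; rewrite subr_ge0; apply: hc.
have p1 : 0 <= (1 - y) * (bern n c y - bern n c x) by apply: mulr_ge0; lra.
have p2 : 0 <= y * (bern n (fun k => c k.+1) y - bern n (fun k => c k.+1) x).
  by apply: mulr_ge0; lra.
have p3 : 0 <= (y - x) * (bern n (fun k => c k.+1) x - bern n c x).
  by apply: mulr_ge0; lra.
nra.
Qed.
End Bern.
Arguments bern {R}.
Arguments bern_mono {R}.
Section S.
Variable R : realType.
Lemma Lfl1 (v C : R) : 0 < C -> (Num.floor (v * C))%:~R / C <= v.
Proof. by move=> hC; rewrite ler_pdivrMr // floor_le. Qed.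
Lemma Lfl2 (v C : R) : 0 < C -> v - C^-1 <= (Num.floor (v * C))%:~R / C.
Proof.
move=> hC; rewrite ler_pdivlMr // mulrBl mulVf ?gt_eqF //.
have := floorD1_gt (v * C); rewrite intrD; lra.
Qed.
Lemma Lint (v w : R) (p : nat) : v \is a Num.int -> (0 < p)%N -> v <= w ->
  v <= (Num.floor (w * p%:R))%:~R / p%:R.
Proof.
move=> /intrP[m ->] hp hvw; rewrite ler_pdivlMr ?ltr0n //.
change (m%:~R * (p%:Z)%:~R <= (Num.floor (w * p%:R))%:~R :> R).
rewrite -intrM ler_int floor_ge_int intrM /=.
by apply: ler_wpM2r => //; rewrite ler0n.
Qed.
Lemma Lint1 (v : R) : v \is a Num.int -> (Num.floor (v * 1))%:~R / 1 = v.
Proof. by move=> hv; rewrite mulr1 divr1 floorK. Qed.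
End S.
Arguments Lfl1 {R}. Arguments Lfl2 {R}. Arguments Lint {R}.

Lemma BtildeE (R : realType) n (f : R -> R) x :
  Btilde n f x = bern n (fun k => (Num.floor (f (k%:R / n%:R) * ('C(n, k))%:R))%:~R
                                / ('C(n, k))%:R) x.
Proof.
rewrite /Btilde /bern; apply: eq_bigr => i _.
by rewrite divfK // pnatr_eq0 -lt0n bin_gt0 -ltnS.
Qed.

Lemma fracle (R : realType) (n a b : nat) : (a <= b)%N -> a%:R / n%:R <= b%:R / n%:R :> R.
Proof. by move=> h; apply: ler_wpM2r; [rewrite invr_ge0 ler0n | rewrite ler_nat]. Qed.

Theorem proposition2p2 (R : realType) (f phi : R -> R) (n : nat) :
  (0 < n)%N ->
  f 0 \is a Num.int -> f 1 \is a Num.int ->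
  ((3 <= n)%N -> forall k : nat, (1 <= k)%N -> (k <= n - 2)%N ->
     phi (k.+1%:R / n%:R) - phi (k%:R / n%:R) >= (('C(n, k.+1))%:R)^-1) ->
  mono_incr_on 0 (n%:R^-1) f ->
  mono_incr_on (1 - n%:R^-1) 1 f ->
  ((3 <= n)%N -> mono_incr_on (n%:R^-1) (1 - n%:R^-1) (fun x => f x - phi x)) ->
  mono_incr_on 0 1 (Btilde n f).
Proof.
move=> n0 hf0 hf1 hphi hm0 hm1 hmid x y h0 hxy h1.
rewrite !BtildeE; apply: bern_mono => // k hk.
have hN : (0 < n%:R :> R) by rewrite ltr0n.
have nz : n%:R != 0 :> R by rewrite pnatr_eq0 -lt0n.
have Ninv : n%:R^-1 = 1%:R / n%:R :> R by rewrite div1r.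
have None : 1 - n%:R^-1 = (n.-1)%:R / n%:R :> R.
  have g : forall m, 1 - (m.+1)%:R^-1 = m%:R / (m.+1)%:R :> R.
    by move=> m; rewrite -natr1; field; rewrite natr1 pnatr_eq0.
  by rewrite -[in LHS](prednK n0) g prednK.
have hone : n%:R / n%:R = 1 :> R by rewrite divff.
have Cpos : forall j, (j <= n)%N -> (0 < ('C(n, j))%:R :> R).
  by move=> j hj; rewrite ltr0n bin_gt0.
case: k hk => [|k] hk.
  rewrite bin0 mul0r divr1 floorK ?mulr1 //.
  rewrite bin1; apply: Lint => //.
  by apply: hm0 => //; [rewrite divr_ge0 // ler0n | rewrite div1r].
case: (ltnP k.+2 n) => hk2.
  have n3 : (3 <= n)%N by apply: leq_ltn_trans hk2.
  have hk' : (k.+1 <= n - 2)%N by rewrite leq_subRL // ?addn2 // ltnW.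
  have e1 := hphi n3 k.+1 isT hk'.
  have e2 := Lfl1 (f (k.+1%:R / n%:R)) _ (Cpos _ (ltnW hk)).
  have e3 := Lfl2 (f (k.+2%:R / n%:R)) _ (Cpos _ hk).
  have e4 := hmid n3 (k.+1%:R / n%:R) (k.+2%:R / n%:R).
  have : f (k.+1%:R / n%:R) - phi (k.+1%:R / n%:R) <=
         f (k.+2%:R / n%:R) - phi (k.+2%:R / n%:R).
    apply: e4; first by rewrite [X in X <= _]Ninv fracle.
      by rewrite fracle.
    by rewrite None fracle // -ltnS prednK.
  lra.
have ekn : n = k.+2 by apply/eqP; rewrite eqn_leq hk2 hk.
have e2 := Lfl1 (f (k.+1%:R / n%:R)) _ (Cpos _ (ltnW hk)).
rewrite {4 5 6}ekn binn -ekn hone divr1 mulr1 (floorK hf1).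
apply: le_trans e2 _; apply: hm1.
- by rewrite None ekn fracle.
- by rewrite -[X in _ <= X]hone fracle // ltnW.
- by [].
Qed.
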